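(* Let $P=(Q,I,M,\Delta)$ be a broadcast protocol and $S$ the set returned by the saturation algorithm on $P$. Then $S$ is exactly the set of states $q$ for which there exists a lossy execution covering $\{q\}$. In particular, for every $F\subseteq Q$, there exists a lossy execution covering $F$ if and only if $F\cap S\neq\emptyset$.
   Context: A broadcast protocol is a tuple $P=(Q,I,M,\Delta)$ where $Q$ is a finite set of states, $I\subseteq Q$ initial states, $M$ a finite message alphabet and $\Delta\subseteq Q\times\{!!m,\ ??m \mid m\in M\}\times Q$ ($!!m$ = broadcast, $??m$ = reception). Protocols are complete for receptions: for every $q$, $m$ there is $q'$ with $(q,??m,q')\in\Delta$. A configuration is a finite undirected graph $\gamma=(V,E,L)$, $E$ symmetric irreflexive, $L:V\to Q$; $L(\gamma)=L(V)$; $\gamma$ is initial if $L(V)\subseteq I$. A lossy step goes from $\gamma=(V,E,L)$ to $\gamma'=(V,E,L')$ (same nodes and edges) if there exist a node $v$ and $m\in M$ with $(L(v),!!m,L'(v))\in\Delta$ and either (a) $L'(v')=L(v')$ for all $v'\neq v$ (the broadcast is lost), or (b) for every $v'\neq v$: if $v'$ is a neighbour of $v$ then $(L(v'),??m,L'(v'))\in\Delta$, otherwise $L'(v')=L(v')$ (successful broadcast). A lossy execution is a sequence $\gamma_0,\dots,\gamma_r$ with $\gamma_0$ initial and consecutive lossy steps; it covers $F$ if $L(\gamma_r)\cap F\neq\emptyset$. The saturation algorithm: start with $S:=I$, $c:=|I|$; repeat: if there is $(q_1,!!m,q_2)\in\Delta$ with $q_1\in S$, $q_2\notin S$, add $q_2$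 to $S$ and $c:=c+1$; else if there are $(q_1,!!m,q_2),(q_1',??m,q_2')\in\Delta$ with $q_1,q_2,q_1'\in S$, $q_2'\notin S$, add $q_2'$ and $c:=c+2$; else stop and return $S$. *)

(* Defs.v *)
From mathcomp Require Import all_boot.
Set Implicit Arguments. Unset Strict Implicit. Unset Printing Implicit Defensive.

Inductive act (M : Type) := Bcast of M | Recv of M.
Arguments Bcast {M} _.
Arguments Recv {M} _.

Section Broadcast.
Variables (Q M : finType).
Variable Delta : Q -> act M -> Q -> bool.

Definition complete_for_receptions : Prop :=
  forall (q : Q) (m : M), exists q', Delta q (Recv m) q'.

(* Configurations over a fixed graph (V, E): labelings L : V -> Q.
   Lossy steps preserve nodes and edges, so an execution is a sequence of
   labelings over one fixed graph. *)
Definition lossy_step (V : finType) (E : rel V) (L L' : V -> Q) : Prop :=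
  exists (v : V) (m : M),
    Delta (L v) (Bcast m) (L' v) /\
    ((forall v', v' != v -> L' v' = L v') \/
     (forall v', v' != v ->
        if E v v' then Delta (L v') (Recv m) (L' v') else L' v' == L v')).

Inductive lossy_reach (V : finType) (E : rel V) : (V -> Q) -> (V -> Q) -> Prop :=
| lr_refl L : lossy_reach E L L
| lr_step L L' L'' : lossy_step E L L' -> lossy_reach E L' L'' -> lossy_reach E L L''.

Definition lossy_coverable (I : {set Q}) (F : {set Q}) : Prop :=
  exists (V : finType) (E : rel V) (L0 Lr : V -> Q),
    symmetric E /\ irreflexive E /\
    (forall v, L0 v \in I) /\
    lossy_reach E L0 Lr /\
    (exists v, Lr v \in F).

Definition sat_rule1 (S : {set Q}) (q2 : Q) : Prop :=
  exists (q1 : Q) (m : M), [/\ Delta q1 (Bcast m) q2, q1 \in S & q2 \notin S].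

Definition sat_rule2 (S : {set Q}) (q2' : Q) : Prop :=
  exists (q1 q2 q1' : Q) (m : M),
    Delta q1 (Bcast m) q2 /\ Delta q1' (Recv m) q2' /\
    q1 \in S /\ q2 \in S /\ q1' \in S /\ q2' \notin S.

Definition sat_step (s s' : {set Q} * nat) : Prop :=
  (exists q2, sat_rule1 s.1 q2 /\ s' = (q2 |: s.1, s.2 + 1)) \/
  ((forall q2, ~ sat_rule1 s.1 q2) /\
   exists q2', sat_rule2 s.1 q2' /\ s' = (q2' |: s.1, s.2 + 2)).

Inductive sat_reach : {set Q} * nat -> {set Q} * nat -> Prop :=
| sr_refl s : sat_reach s s
| sr_step s s' s'' : sat_step s s' -> sat_reach s' s'' -> sat_reach s s''.

Definition saturation_returns (I S : {set Q}) : Prop :=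
  exists c : nat,
    sat_reach (I, #|I|) (S, c) /\ (forall s', ~ sat_step (S, c) s').

End Broadcast.

(* Main.v *)
Require Import Defs.
From mathcomp Require Import all_boot.

Set Implicit Arguments. Unset Strict Implicit. Unset Printing Implicit Defensive.

Section Proofs.
Variables (Q M : finType) (Delta : Q -> act M -> Q -> bool).

Definition gstep (V : finType) (E : rel V) (r : V) (L L' : V -> Q) : Prop :=
  exists (u : V) (m : M), Delta (L u) (Bcast m) (L' u) /\
   ((forall v', v' != u -> L' v' = L v') \/
    (u != r /\ forall v', v' != u ->
       if E u v' then Delta (L v') (Recv m) (L' v') else L' v' == L v')).

Inductive greach (V : finType) (E : rel V) (r : V) : (V -> Q) -> (V -> Q) -> Prop :=
| gr_refl L : greach E r L L
| gr_step L L' L'' : gstep E r L L' -> greach E r L' L'' -> greach E r L L''.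

Lemma greach_lossy V E r L L' : @greach V E r L L' -> lossy_reach Delta E L L'.
Proof.
elim=> [L0|L1 L2 L3 [u [m [H1 H2]]] _ IH]; first exact: lr_refl.
apply: lr_step IH; exists u, m; split=> //.
by case: H2 => [H|[_ H]]; [left|right].
Qed.

Lemma greach_snoc V E r L L' L'' :
  @greach V E r L L' -> gstep E r L' L'' -> greach E r L L''.
Proof.
elim=> [L0 H|L1 L2 L3 H _ IH H'].
  by apply: gr_step H _; apply: gr_refl.
exact: gr_step H (IH H').
Qed.

Lemma greach_trans V E r L1 L2 L3 :
  @greach V E r L1 L2 -> greach E r L2 L3 -> greach E r L1 L3.
Proof. by elim=> // ? ? ? H _ IH H'; apply: gr_step H (IH H'). Qed.

Definition Cov (I : {set Q}) (q : Q) := exists (V : finType) (E : rel V) (L0 Lr : V -> Q) (r : V),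
  [/\ symmetric E, irreflexive E, forall v, L0 v \in I, greach E r L0 Lr & Lr r = q].

Definition gE (VA VB : finType) (EA : rel VA) (EB : rel VB) (a : VA) (b : VB) : rel (VA + VB) :=
  fun x y => match x, y with
  | inl x, inl y => EA x y
  | inr x, inr y => EB x y
  | inl x, inr y => (x == a) && (y == b)
  | inr x, inl y => (x == b) && (y == a) end.

Definition glue (VA VB : Type) (LA : VA -> Q) (LB : VB -> Q) : VA + VB -> Q :=
  fun x => match x with inl x => LA x | inr y => LB y end.

Lemma liftA (VA VB : finType) (EA : rel VA) (EB : rel VB) a b LA LA' LB :
  greach EA a LA LA' -> greach (gE EA EB a b) (inr b) (glue LA LB) (glue LA' LB).
Proof.
elim=> [L0|L1 L2 L3 [u [m [Hd H]]] _ IH]; first exact: gr_refl.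
apply: gr_step IH; exists (inl u), m; split=> //.
case: H => [H|[Hua H]].
  left; case=> [w|w] //= Hw; apply: H.
  by apply: contra Hw => /eqP ->.
right; split=> //; case=> [w|w] Hw /=.
  by apply: H; apply: contra Hw => /eqP ->.
by rewrite (negbTE Hua) /= eqxx.
Qed.

Lemma liftB (VA VB : finType) (EA : rel VA) (EB : rel VB) a b LA LB LB' :
  greach EB b LB LB' -> greach (gE EA EB a b) (inr b) (glue LA LB) (glue LA LB').
Proof.
elim=> [L0|L1 L2 L3 [u [m [Hd H]]] _ IH]; first exact: gr_refl.
apply: gr_step IH; exists (inr u), m; split=> //.
case: H => [H|[Hub H]].
  left; case=> [w|w] //= Hw; apply: H.
  by apply: contra Hw => /eqP ->.
right; split; first by apply: contra Hub => /eqP [->].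
case=> [w|w] Hw /=.
  by rewrite (negbTE Hub) /= eqxx.
by apply: H; apply: contra Hw => /eqP ->.
Qed.

Lemma sat_mono s s' : sat_reach Delta s s' -> s.1 \subset s'.1.
Proof.
elim=> // s1 s2 s3 H _ IH; apply: subset_trans IH.
case: H => [[q [_ ->]]|[_ [q [_ ->]]]] /=; exact: subsetUr.
Qed.

Lemma closed_reach (S : {set Q}) (V : finType) (E : rel V) (L L' : V -> Q) :
  (forall q1 m q2, q1 \in S -> Delta q1 (Bcast m) q2 -> q2 \in S) ->
  (forall q1 q2 q1' m q2', q1 \in S -> q2 \in S -> q1' \in S ->
       Delta q1 (Bcast m) q2 -> Delta q1' (Recv m) q2' -> q2' \in S) ->
  lossy_reach Delta E L L' -> (forall v, L v \in S) -> forall v, L' v \in S.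
Proof.
move=> C1 C2; elim=> // L1 L2 L3 [u [m [Hd H]]] _ IH HS; apply: IH => v.
have Hu : L2 u \in S by apply: C1 Hd.
case: (eqVneq v u) => [->|Hvu] //.
case: H => H; first by rewrite H.
have := H v Hvu; case: ifP => _; last by move/eqP ->.
by apply: C2 (HS u) Hu (HS v) Hd.
Qed.

Hypothesis Hcomplete : complete_for_receptions Delta.

Lemma cov_init (I : {set Q}) (q : Q) : q \in I -> Cov I q.
Proof.
move=> Hq; exists (unit : finType), (fun _ _ => false), (fun _ => q), (fun _ => q), tt.
split=> //; exact: gr_refl.
Qed.

Lemma cov_rule1 (I : {set Q}) q1 m q2 : Cov I q1 -> Delta q1 (Bcast m) q2 -> Cov I q2.
Proof.
move=> [V [E [L0 [Lr [r [Hs Hi H0 Hg Hq]]]]]] Hd.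
exists V, E, L0, (fun x => if x == r then q2 else Lr x), r; split=> //; last by rewrite eqxx.
apply: greach_snoc Hg _; exists r, m; rewrite eqxx Hq; split=> //.
by left=> v /negbTE ->.
Qed.

Lemma cov_rule2 (I : {set Q}) q1 q2 q1' q2' m : Cov I q1 -> Cov I q1' ->
  Delta q1 (Bcast m) q2 -> Delta q1' (Recv m) q2' -> Cov I q2'.
Proof.
move=> [VA [EA [LA0 [LA [a [HsA HiA H0A HgA HqA]]]]]]
       [VB [EB [LB0 [LB [b [HsB HiB H0B HgB HqB]]]]]] Hd Hr.
pose L'' := fun x => match x with
  | inl x => if x == a then q2 else if EA a x then odflt (LA x) [pick q | Delta (LA x) (Recv m) q] else LA x
  | inr y => if y == b then q2' else LB y end.
exists (VA + VB)%type, (gE EA EB a b), (glue LA0 LB0), L'', (inr b); split.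
- case=> [x|x] [y|y] /=; [exact: HsA | exact: andbC | exact: andbC | exact: HsB].
- case=> [x|x] /=; [exact: HiA | exact: HiB].
- by case=> [x|x] /=.
- apply: greach_trans (liftA EB b LB0 HgA) _.
  apply: greach_snoc (liftB EA a LA HgB) _.
  exists (inl a), m; rewrite /= eqxx HqA; split=> //; right; split=> //.
  case=> [w|w] Hw; rewrite /L'' /=.
    have Hwa : w != a by apply: contra Hw => /eqP ->.
    rewrite (negbTE Hwa); case HE: (EA a w). 2: by rewrite eqxx.
    case: pickP => [q Hq|Hn] //=.
    by have [q' Hq'] := Hcomplete (LA w) m; move: (Hn q'); rewrite Hq'.
  case: (eqVneq w b) => [->|Hwb] /=; [by rewrite HqB | by rewrite eqxx].
- by rewrite /= eqxx.
Qed.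

Lemma sound (I : {set Q}) s s' : sat_reach Delta s s' -> (forall q, q \in s.1 -> Cov I q) ->
  forall q, q \in s'.1 -> Cov I q.
Proof.
elim=> // s1 s2 s3 H _ IH HC; apply: IH.
case: H => [[q2 [[q1 [m [Hd Hq1 _]]] ->]]|[_ [q2 [[q1 [p2 [q1' [m [Hd [Hr [Hq1 [Hp2 [Hq1' _]]]]]]]]] ->]]]] q /=;
  rewrite in_setU1 => /orP [/eqP ->|]; try exact: HC.
- exact: cov_rule1 (HC _ Hq1) Hd.
- exact: cov_rule2 (HC _ Hq1) (HC _ Hq1') Hd Hr.
Qed.

End Proofs.

Theorem lemma3p4 (Q M : finType) (I : {set Q}) (Delta : Q -> act M -> Q -> bool)
  (Hcomplete : complete_for_receptions Delta) (S : {set Q}) :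
  saturation_returns Delta I S ->
  (forall q : Q, q \in S <-> lossy_coverable Delta I [set q]) /\
  (forall F : {set Q}, lossy_coverable Delta I F <-> F :&: S != set0).
Proof.
move=> [c [Hr Hterm]].
have C1 : forall q1 m q2, q1 \in S -> Delta q1 (Bcast m) q2 -> q2 \in S.
  move=> q1 m q2 H1 Hd; apply/negPn/negP => Hn.
  apply: (Hterm (q2 |: S, c + 1)); left; exists q2; split=> //.
  by exists q1, m; split.
have C2 : forall q1 q2 q1' m q2', q1 \in S -> q2 \in S -> q1' \in S ->
       Delta q1 (Bcast m) q2 -> Delta q1' (Recv m) q2' -> q2' \in S.
  move=> q1 q2 q1' m q2' H1 H2 H1' Hd Hd'; apply/negPn/negP => Hn.
  apply: (Hterm (q2' |: S, c + 2)); right; split.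
    move=> q [p [m' [Hd'' Hp Hq]]]; by rewrite (C1 _ _ _ Hp Hd'') in Hq.
  by exists q2'; split=> //; exists q1, q2, q1', m.
have IS : I \subset S := sat_mono Hr.
have covS : forall q, q \in S -> Cov Delta I q.
  by apply: (sound Hcomplete Hr) => q /= Hq; apply: cov_init.
have cov_out : forall F, lossy_coverable Delta I F -> F :&: S != set0.
  move=> F [V [E [L0 [Lr [_ [_ [H0 [Hr' [v Hv]]]]]]]]].
  apply/set0Pn; exists (Lr v); rewrite inE Hv /=.
  by apply: (closed_reach C1 C2 Hr') => w; apply: (subsetP IS).
have cov_F : forall (F : {set Q}) q, q \in F -> q \in S -> lossy_coverable Delta I F.
  move=> F q HF /covS [V [E [L0 [Lr [r [Hs Hi H0 Hg Hq]]]]]].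
  exists V, E, L0, Lr; do 4 (split=> //); first exact: greach_lossy Hg.
  by exists r; rewrite Hq.
split.
  move=> q; split; first by move=> Hq; apply: (cov_F _ q) => //; rewrite inE.
  by move/cov_out => /set0Pn [x]; rewrite !inE => /andP [/eqP ->].
move=> F; split; first exact: cov_out.
by move/set0Pn => [x]; rewrite inE => /andP [Hx Hs]; apply: cov_F Hx Hs.
Qed.
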